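(* Let $n\ge 6$ be even, and let $r=(s_1,\dots,s_n)$ be a Latin row of length $n$ such that $\mathrm{dist}(s_j,s_{j+1})\ge \frac n2-1$ for all $1\le j\le n-1$ and $\mathrm{dist}(s_n,s_1)\ge\frac n2-1$. Let $d_*=(\epsilon_1,\dots,\epsilon_{n-1},h)$ be its extended difference row. Then $d_*$ is a rotation of \[(\underbrace{1,\dots,1}_{\frac n2-1},0,\underbrace{-1,\dots,-1}_{\frac n2-1},0),\] or $d_*=\pm(1,1,\dots,1)$. Moreover, the number of such rows $r$ with $s_1=1$ is $n+2$ if $n\equiv 0\pmod 4$ and $n$ if $n\equiv 2\pmod 4$.
   Context: Symbols are $[1,n]$. For $a,b\in[1,n]$, $\mathrm{dist}(a,b)$ is the minimum of the residues of $a-b$ and $b-a$ modulo $n$ (in $[0,n-1]$). A Latin row of length $n$ is a permutation $(s_1,\dots,s_n)$ of $[1,n]$. Its extended difference row is $d_*=(\epsilon_1,\dots,\epsilon_{n-1},h)$ where, with $h_j\in[0,n-1]$, $h_j\equiv s_{j+1}-s_j\pmod n$ for $1\le j\le n-1$ and $h_n\equiv s_1-s_n\pmod n$, one sets $\epsilon_j=h_j-\frac n2$ and $h=h_n-\frac n2$ (integers, not reduced mod $n$). Writing $\epsilon_n=h$, the rotation by 1 of $d_*$ is $(\epsilon_n,\epsilon_1,\dots,\epsilon_{n-1})$; the rotations of $d_*$ are the results of applying this cyclic shift $1,2,\dots,n$ times. *)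

(* Defs.v *)
From mathcomp Require Import all_boot all_order all_algebra.
Set Implicit Arguments. Unset Strict Implicit. Unset Printing Implicit Defensive.
Import Order.TTheory GRing.Theory Num.Theory.

Definition latin_row (n : nat) (s : seq nat) : bool := perm_eq s (iota 1 n).

Definition resid (n a b : nat) : nat := (a + n - b) %% n.

Definition dist (n a b : nat) : nat := minn (resid n a b) (resid n b a).

Definition sj (s : seq nat) (j : nat) : nat := nth 0 s j.-1.

Definition csucc (n j : nat) : nat := if j == n then 1 else j.+1.

Definition hj (n : nat) (s : seq nat) (j : nat) : nat :=
  resid n (sj s (csucc n j)) (sj s j).

(* extended difference row d_* = (eps_1, ..., eps_{n-1}, h), eps_j = h_j - n/2 *)
Definition ext_diff_row (n : nat) (s : seq nat) : seq int :=
  [seq (Posz (hj n s j) - Posz (n %/ 2))%R | j <- iota 1 n].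

Definition far_row (n : nat) (s : seq nat) : bool :=
  [forall j : 'I_n, (n %/ 2 - 1 <= dist n (sj s j.+1) (sj s (csucc n j.+1)))%N].

(* rotation by one: (e_n, e_1, ..., e_{n-1}) = rotr 1; rotation by k = rotr k *)
Definition is_rotation_of (d p : seq int) : Prop :=
  exists k : nat, (1 <= k <= size p)%N /\ d = rotr k p.

Definition pattern (n : nat) : seq int :=
  nseq (n %/ 2 - 1) 1%R ++ [:: 0%R] ++ nseq (n %/ 2 - 1) (-1)%R ++ [:: 0%R].

(* Main.v *)
Require Import Defs.
From mathcomp Require Import all_boot all_order all_algebra.
From mathcomp Require Import zify.
Import Order.TTheory GRing.Theory Num.Theory.
Set Implicit Arguments. Unset Strict Implicit. Unset Printing Implicit Defensive.

Lemma modn_lt2 x n : x < n + n -> x %% n = if x < n then x else x - n.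
Proof.
move=> h; case: ifP => hx; first by rewrite modn_small.
have -> : x = (x - n) + n by lia.
by rewrite modnDr modn_small; lia.
Qed.

Lemma nth_rot (T : Type) (x0 : T) (s : seq T) k i :
  k <= size s -> i < size s -> nth x0 (rot k s) i = nth x0 s ((i + k) %% size s).
Proof.
move=> hk hi; rewrite /rot nth_cat size_drop.
case: ifP => h.
  by rewrite nth_drop modn_small 1?addnC //; lia.
rewrite nth_take; last by lia.
rewrite modn_lt2; last by lia.
by case: ifP => h2; [lia| congr nth; lia].
Qed.

Open Scope ring_scope.

Lemma exists_min (f : nat -> int) k : (0 < k)%N ->
  exists2 i, (i < k)%N & forall j, (j < k)%N -> f i <= f j.
Proof.
elim: k => // k IH _.
case: (posnP k) => [->|hk].
  by exists 0%N => // j; rewrite ltnS leqn0 => /eqP ->.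
have [i hi Hi] := IH hk.
case: (lerP (f i) (f k)) => h.
  exists i; first by apply: ltn_trans hi _.
  move=> j; rewrite ltnS leq_eqVlt => /orP [/eqP ->|]; [done| exact: Hi].
exists k => // j; rewrite ltnS leq_eqVlt => /orP [/eqP ->|hj]; first done.
by apply: le_trans (ltW h) (Hi j hj).
Qed.

Lemma pigeon (f : nat -> int) k (N : int) : (0 < k)%N ->
  (forall i j, (i < k)%N -> (j < k)%N -> f i = f j -> i = j) ->
  (forall i j, (i < k)%N -> (j < k)%N -> 2%:Z * (f j - f i) <= N) ->
  (2 * (k - 1))%:Z <= N.
Proof.
move=> hk Hinj Hb.
have [i0 hi0 Hi0] := exists_min f hk.
have N0 : 0 <= N by have := Hb i0 i0 hi0 hi0; rewrite subrr mulr0.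
pose g j := absz (f j - f i0).
have hg : forall j, (j < k)%N -> (g j)%:Z = f j - f i0.
  by move=> j hj; rewrite /g gez0_abs // subr_ge0 Hi0.
have hu : uniq (map g (iota 0 k)).
  rewrite map_inj_in_uniq ?iota_uniq // => a b; rewrite !mem_iota => /andP [_ ha] /andP [_ hb] hab.
  apply: Hinj; [lia|lia|]; have := hg a ltac:(lia); have := hg b ltac:(lia); rewrite hab; lia.
have hs : {subset map g (iota 0 k) <= iota 0 ((absz N) %/ 2).+1}.
  move=> x /mapP [j]; rewrite mem_iota => /andP [_ hj] ->.
  have hj' : (j < k)%N by lia.
  rewrite mem_iota.
  have := Hb i0 j hi0 hj'; have := hg j hj'; lia.
have := uniq_leq_size hu hs; rewrite size_map !size_iota; lia.
Qed.

Section Walk.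
Variables (n m : nat).
Hypothesis Hnm : n = (m + m)%N.
Hypothesis Hm : (2 < m)%N.

Definition W (e : nat -> int) i L := \sum_(i <= t < i + L) e t.

Lemma W0 e i : W e i 0 = 0.
Proof. by rewrite /W addn0 big_geq. Qed.

Lemma WS e i L : W e i L.+1 = W e i L + e (i + L)%N.
Proof. by rewrite /W addnS big_nat_recr //= leq_addr. Qed.

Lemma Wcons e i L : W e i L.+1 = e i + W e i.+1 L.
Proof. by rewrite /W big_ltn ?addnS ?addSn // ltnS leq_addr. Qed.

Lemma W2 e i : W e i 2 = e i + e i.+1.
Proof. by rewrite !WS W0 add0r addn0 addn1. Qed.

Lemma sum_shift (g : nat -> int) : (forall t, g t = g (t %% n)%N) ->
  forall a, \sum_(a <= t < a + n) g t = \sum_(0 <= t < n) g t.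
Proof.
move=> Hg; elim=> [|a IH]; first by rewrite add0n.
rewrite -IH addSn.
have E1 : \sum_(a <= t < (a + n).+1) g t = g a + \sum_(a.+1 <= t < (a + n).+1) g t.
  by rewrite big_ltn // ltnS leq_addr.
have E2 : \sum_(a <= t < (a + n).+1) g t = \sum_(a <= t < a + n) g t + g (a + n)%N.
  by rewrite big_nat_recr // leq_addr.
have E3 : g (a + n)%N = g a by rewrite Hg modnDr -Hg.
apply: (addrI (g a)); by rewrite -E1 E2 E3 addrC.
Qed.

Lemma sum_abs_le (e : nat -> int) p q : (forall t, `|e t| <= 1) ->
  \sum_(p <= t < q) `|e t| <= (q - p)%:Z.
Proof.
move=> He; apply: le_trans (ler_sum_nat (fun t _ => He t)) _.
by rewrite sumr_const_nat natz.
Qed.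

Definition unit3 (e : nat -> int) := forall t, e t = 0 \/ e t = 1 \/ e t = -1.
Definition per (e : nat -> int) := forall t, e t = e (t %% n)%N.
Definition wcond e := forall i L, (0 < L < n)%N ->
  (~~ odd L -> W e i L != 0) /\ (odd L -> W e i L != m%:Z /\ W e i L != - m%:Z).

Definition patf (t : nat) : int :=
  if (t < m - 1)%N then 1 else if t == (m - 1)%N then 0 else if (t < n - 1)%N then -1 else 0.

Lemma patf_neg t : (t < n)%N -> - patf t = patf ((t + m) %% n)%N.
Proof.
move=> ht; rewrite modn_lt2; last by lia.
case: ifP => h0; rewrite /patf; do ![case: ifP => ?]; lia.
Qed.

Section Structure.
Variable e : nat -> int.
Hypotheses (He3 : unit3 e) (Hper : per e) (Hw : wcond e) (Hsum : W e 0 n = 0).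

Lemma loc i : e i + e i.+1 != 0.
Proof. rewrite -W2; have [] := Hw i (_ : (0 < 2 < n)%N); [lia| by move=> h _; apply: h]. Qed.

Lemma abs1 t : `|e t| <= 1.
Proof. by case: (He3 t) => [->|[->|->]]. Qed.

Lemma exists_zero : exists u, e u = 0.
Proof.
case: (boolP (has (fun t => e t == 0) (iota 0 n))) => [/hasP [u _ /eqP] | hn]; first by eauto.
exfalso.
have hnz : forall t, (t < n)%N -> e t != 0.
  move=> t ht; apply: contra hn => h; apply/hasP; exists t => //; rewrite mem_iota; lia.
have hall : forall t, (t < n)%N -> e t = e 0%N.
  elim=> // t IH ht; rewrite -IH ?(ltnW ht) //.
  move: (loc t) (hnz t (ltnW ht)) (hnz _ ht).
  by case: (He3 t) => [->|[->|->]]; case: (He3 t.+1) => [->|[->|->]]; lia.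
move: Hsum; rewrite /W add0n (eq_big_nat _ _ (fun t ht => hall t _)); last by lia.
rewrite sumr_const_nat subn0; case: (He3 0%N) => [h0|[->|->]].
- by move: (hnz 0%N ltac:(lia)); rewrite h0.
- rewrite natz; lia.
- rewrite mulNrn natz; lia.
Qed.

Definition E j := \sum_(0 <= t < j) e t.
Definition Nabs := \sum_(0 <= t < n) `|e t|.

Lemma E_diff a b : (a <= b)%N -> E b = E a + \sum_(a <= t < b) e t.
Proof. by move=> h; rewrite /E (big_cat_nat _ (n := a)). Qed.

Lemma split3 (g : nat -> int) a b : (a <= b)%N -> (b <= n)%N ->
  \sum_(0 <= t < n) g t = \sum_(0 <= t < a) g t + \sum_(a <= t < b) g t + \sum_(b <= t < n) g t.
Proof.
move=> hab hbn.
by rewrite (big_cat_nat _ (n := b)) // (big_cat_nat _ (n := a)).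
Qed.

Lemma bound2 a b : (a <= b)%N -> (b <= n)%N -> 2%:Z * `|E b - E a| <= Nabs.
Proof.
move=> hab hbn.
have hEn : E n = 0 by move: Hsum; rewrite /W add0n.
have eb : E b = E a + \sum_(a <= t < b) e t by apply: E_diff.
move: hEn; rewrite /Nabs eb /E (split3 e hab hbn) (split3 (fun t => `|e t|) hab hbn).
set A1 := \sum_(0 <= t < a) e t. set S2 := \sum_(a <= t < b) e t.
set S3 := \sum_(b <= t < n) e t.
set B1 := \sum_(0 <= t < a) `|e t|. set B2 := \sum_(a <= t < b) `|e t|.
set B3 := \sum_(b <= t < n) `|e t|.
move=> h0.
have j1 : `|A1| <= B1 by apply: ler_norm_sum.
have j2 : `|S2| <= B2 by apply: ler_norm_sum.
have j3 : `|S3| <= B3 by apply: ler_norm_sum.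
have j4 : `|S2| <= `|A1| + `|S3|.
  have -> : S2 = - (A1 + S3) by lia.
  by rewrite normrN ler_normD.
have -> : A1 + S2 - A1 = S2 by lia.
lia.
Qed.

Lemma E_W a L : E (a + L)%N = E a + W e a L.
Proof. by rewrite /W; apply: E_diff; rewrite leq_addr. Qed.

Lemma N_big : (2 * (m - 1))%:Z <= Nabs.
Proof.
apply: (@pigeon (fun k => E (k.*2)%N) m Nabs); first by lia.
- move=> i j hi hj hE; case: (ltngtP i j) => // hij; exfalso.
  + have eq2 : ((j.*2)%N = (i.*2)%N + ((j.*2)%N - (i.*2)%N))%N by lia.
    move: hE; rewrite eq2 E_W => hE.
    have hev : ~~ odd (double j - double i) by rewrite -doubleB odd_double.
    have [/(_ hev) h _] := Hw (double i) (ltac:(lia) : (0 < double j - double i < n)%N).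
    have h0 : W e (double i) (double j - double i) = 0 by lia.
    by rewrite h0 eqxx in h.
  + have eq2 : ((i.*2)%N = (j.*2)%N + ((i.*2)%N - (j.*2)%N))%N by lia.
    move: hE; rewrite eq2 E_W => hE.
    have hev : ~~ odd (double i - double j) by rewrite -doubleB odd_double.
    have [/(_ hev) h _] := Hw (double j) (ltac:(lia) : (0 < double i - double j < n)%N).
    have h0 : W e (double j) (double i - double j) = 0 by lia.
    by rewrite h0 eqxx in h.
- move=> i j hi hj /=; case: (leqP i j) => hij.
  + have := bound2 (_ : ((i.*2)%N <= (j.*2)%N)%N) (_ : ((j.*2)%N <= n)%N); move=> /(_ ltac:(lia) ltac:(lia)); lia.
  + have := bound2 (_ : ((j.*2)%N <= (i.*2)%N)%N) (_ : ((i.*2)%N <= n)%N); move=> /(_ ltac:(lia) ltac:(lia)); lia.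
Qed.

Lemma Z3 a b c : (a < b)%N -> (b < c)%N -> (c < a + n)%N ->
  e a = 0 -> e b = 0 -> e c = 0 -> False.
Proof.
move=> hab hbc hca ea eb ec.
have hN : Nabs = \sum_(a <= t < a + n) `|e t|.
  rewrite /Nabs; symmetry; apply: sum_shift => t; by rewrite {1}Hper.
have s1 : \sum_(a <= t < a + n) `|e t| = \sum_(a <= t < c) `|e t| + `|e c| + \sum_(c.+1 <= t < a + n) `|e t|.
  rewrite (big_cat_nat _ (n := c.+1)) /=; [|lia|lia].
  by rewrite big_nat_recr /=; [|lia].
have s2 : \sum_(a <= t < c) `|e t| = \sum_(a <= t < b) `|e t| + `|e b| + \sum_(b.+1 <= t < c) `|e t|.
  rewrite (big_cat_nat _ (n := b.+1)) /=; [|lia|lia].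
  by rewrite big_nat_recr /=; [|lia].
have s3 : \sum_(a <= t < b) `|e t| = `|e a| + \sum_(a.+1 <= t < b) `|e t|.
  by rewrite big_ltn.
have b1 := sum_abs_le (a.+1) b abs1.
have b2 := sum_abs_le (b.+1) c abs1.
have b3 := sum_abs_le (c.+1) (a + n) abs1.
have := N_big; rewrite hN s1 s2 s3 ea eb ec normr0.
lia.
Qed.

Lemma run a : e a = 0 -> exists L sg, [/\ (0 < L < m)%N, sg = 1 \/ sg = -1,
  (forall t, (0 < t <= L)%N -> e (a + t)%N = sg) & e (a + L.+1)%N = 0].
Proof.
move=> ha.
have hs : e a.+1 != 0 by have := loc a; rewrite ha add0r.
have hsg : e a.+1 = 1 \/ e a.+1 = -1.
  by case: (He3 a.+1) => [h|[h|h]]; [move: hs; rewrite h eqxx | left | right].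
case: (boolP (has (fun t => e (a + t.+1)%N != e a.+1) (iota 0 m))) => hh.
- have exP : exists t, (t < m)%N && (e (a + t.+1)%N != e a.+1).
    move/hasP: hh => [t]; rewrite mem_iota => /andP [_ ht] hne; exists t; rewrite hne andbT; lia.
  case: (ex_minnP exP) => t0 /andP [ht0 hne] hmin.
  have hpos : (0 < t0)%N by case: t0 {ht0 hmin} hne => //; rewrite addn1 eqxx.
  have hrun : forall t, (0 < t <= t0)%N -> e (a + t)%N = e a.+1.
    move=> t /andP [t1 t2]; case: t t1 t2 => // t _ ht.
    apply/eqP; apply: contraT => hne'.
    have := hmin t; rewrite (ltn_trans ht ht0) hne' => /(_ isT); lia.
  exists t0, (e a.+1); split => //; first by lia.
  have := loc (a + t0)%N; rewrite hrun ?hpos ?leqnn // -addnS.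
  move: hne; case: hsg => ->; case: (He3 (a + t0.+1)%N) => [->|[->|->]]; lia.
- have hall : forall t, (t < m)%N -> e (a + t.+1)%N = e a.+1.
    move=> t ht; apply/eqP; apply: contraNT hh => hne; apply/hasP; exists t => //; rewrite mem_iota; lia.
  have Wm : W e a.+1 m = e a.+1 *+ m.
    rewrite /W (eq_big_nat _ _ (F2 := fun _ => e a.+1)) ?sumr_const_nat ?addKn // => t /andP [h1 h2].
    have := hall (t - a.+1)%N ltac:(lia).
    by have -> : (a + (t - a.+1).+1)%N = t by lia.
  exfalso; case: (boolP (odd m)) => hodd.
  + have [_ /(_ hodd) [h1 h2]] := Hw a.+1 (ltac:(lia) : (0 < m < n)%N).
    move: h1 h2; rewrite Wm; case: hsg => ->; rewrite ?mulNrn natz; lia.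
  + have [_ h] := Hw a (ltac:(lia) : (0 < m.+1 < n)%N).
    move: h; rewrite /= hodd => /(_ isT) [h1 h2].
    move: h1 h2; rewrite Wcons Wm ha add0r; case: hsg => ->; rewrite ?mulNrn natz; lia.
Qed.

Lemma structure : exists c, forall i, e i = patf ((i + c) %% n)%N.
Proof.
have [u hu] := exists_zero.
have [L1 [s1 [hL1 hs1 hr1 hz1]]] := run hu.
have [L2 [s2 [hL2 hs2 hr2 hz2]]] := run hz1.
have hL : L1 = (m-1)%N /\ L2 = (m-1)%N.
  case: (ltnP (u + L1.+1 + L2.+1) (u + n)) => hw; last by lia.
  exfalso; apply: (@Z3 u (u + L1.+1)%N (u + L1.+1 + L2.+1)%N) => //; lia.
case: hL => ? ?; subst L1 L2.
have hv : (u + (m-1).+1)%N = (u + m)%N by lia.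
rewrite hv in hz1 hr2 hz2.
have hsum' : \sum_(u <= t < u + n) e t = 0.
  by rewrite sum_shift //; move: Hsum; rewrite /W add0n.
have hs12 : s2 = - s1.
  have e1 : \sum_(u <= t < u + n) e t = \sum_(u <= t < u + m) e t + \sum_(u + m <= t < u + n) e t.
    by rewrite (big_cat_nat _ (n := (u + m)%N)) //; lia.
  have e2 : \sum_(u <= t < u + m) e t = s1 *+ (m - 1).
    rewrite big_ltn; last by lia.
    rewrite hu add0r (eq_big_nat _ _ (F2 := fun _ => s1)) ?sumr_const_nat; first by congr (_ *+ _); lia.
    move=> t /andP [h1 h2]; have -> : t = (u + (t - u))%N by lia.
    by apply: hr1; lia.
  have e3 : \sum_(u + m <= t < u + n) e t = s2 *+ (m - 1).
    rewrite big_ltn; last by lia.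
    rewrite hz1 add0r (eq_big_nat _ _ (F2 := fun _ => s2)) ?sumr_const_nat; first by congr (_ *+ _); lia.
    move=> t /andP [h1 h2]; have -> : t = (u + m + (t - (u + m)))%N by lia.
    by apply: hr2; lia.
  move: hsum'; rewrite e1 e2 e3.
  by case: hs1 => ->; case: hs2 => ->; rewrite ?mulNrn natz; lia.
have key : forall t, (t < n)%N -> e (u + t.+1)%N = s1 * patf t.
  move=> t ht; rewrite /patf; case: ifP => h1.
    by rewrite hr1 ?mulr1 //; lia.
  case: ifP => h2.
    have -> : (u + t.+1 = u + m)%N by lia.
    by rewrite hz1 mulr0.
  case: ifP => h3.
    have -> : (u + t.+1 = u + m + (t.+1 - m))%N by lia.
    by rewrite hr2 ?hs12 ?mulrN1 //; lia.
  have -> : (u + t.+1 = u + n)%N by lia.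
  by rewrite Hper modnDr -Hper hu mulr0.
have hi : forall i, e i = s1 * patf ((i + (n-1)*(u+1)) %% n)%N.
  move=> i; rewrite -key; last by rewrite ltn_pmod //; lia.
  rewrite Hper [in RHS]Hper; congr e.
  have -> : (u + ((i + (n - 1) * (u + 1)) %% n).+1 = (i + (n - 1) * (u + 1)) %% n + (u + 1))%N by lia.
  rewrite modnDml -addnA.
  have -> : ((n - 1) * (u + 1) + (u + 1) = (u + 1) * n)%N by nia.
  by rewrite addnC modnMDl.
case: hs1 => hs1.
  by exists ((n-1)*(u+1))%N => i; rewrite hi hs1 mul1r.
exists ((n-1)*(u+1) + m)%N => i; rewrite hi hs1 mulN1r patf_neg; last by rewrite ltn_pmod //; lia.
by rewrite modnDml addnA.
Qed.

End Structure.
Definition Qs t := \sum_(0 <= t' < t) patf (t' %% n)%N.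
Definition Pf r : int := if (r <= m - 1)%N then r%:Z else (n - 1 - r)%:Z.

Lemma Q_small r : (r < n)%N -> Qs r = Pf r.
Proof.
elim: r => [|r IH] hr; first by rewrite /Qs big_geq // /Pf; case: ifP => //; lia.
rewrite /Qs big_nat_recr //=.
have := IH (ltnW hr); rewrite /Qs => ->.
rewrite modn_small; last by lia.
rewrite /Pf /patf; do ![case: ifP => ?]; lia.
Qed.

Lemma Q_n : Qs n = 0.
Proof.
have hn : n = (n - 1).+1 by lia.
rewrite /Qs; transitivity (\sum_(0 <= t < (n-1).+1) patf (t %% n)%N); first by rewrite -hn.
rewrite big_nat_recr //=.
have := Q_small (_ : (n - 1 < n)%N); rewrite /Qs => -> ; last by lia.
rewrite modn_small; last by lia.
rewrite /Pf /patf; do ![case: ifP => ?]; lia.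
Qed.

Lemma Q_addn x : Qs (x + n) = Qs x.
Proof.
rewrite {1}/Qs (big_cat_nat _ (n := x)) //= ?leq_addr // sum_shift; last by move=> t; rewrite modn_mod.
by rewrite -/(Qs n) Q_n addr0.
Qed.

Lemma Q_per k r : Qs (k * n + r) = Qs r.
Proof.
elim: k => [|k IH]; first by rewrite mul0n add0n.
by rewrite mulSn -addnA addnC Q_addn.
Qed.

Lemma Q_mod t : Qs t = Qs (t %% n)%N.
Proof. by rewrite {1}(divn_eq t n) Q_per. Qed.

Lemma W_pat c i L : W (fun t => patf ((t + c) %% n)%N) i L = Qs (i + c + L) - Qs (i + c).
Proof.
have h1 : Qs (i + c + L) = Qs (i + c) + \sum_(i + c <= t < i + c + L) patf (t %% n)%N.
  by rewrite /Qs (big_cat_nat _ (n := (i+c)%N)) // leq_addr.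
have h2 : \sum_(i + c <= t < i + c + L) patf (t %% n)%N = \sum_(i <= t < i + L) patf ((t + c) %% n)%N.
  by rewrite addnAC big_addn addnK.
by rewrite h1 h2 addrAC subrr add0r.
Qed.

Lemma pat_wcond c : wcond (fun t => patf ((t + c) %% n)%N).
Proof.
move=> i L hL; rewrite W_pat Q_mod [Qs (i + c)]Q_mod.
have ha : ((i + c + L) %% n < n)%N by rewrite ltn_pmod //; lia.
have hb : ((i + c) %% n < n)%N by rewrite ltn_pmod //; lia.
have hab : ((i + c + L) %% n)%N != ((i + c) %% n)%N.
  apply/negP => /eqP h.
  have : (i + c + L == (i + c) + 0 %[mod n])%N by rewrite addn0 h.
  rewrite eqn_modDl mod0n modn_small; lia.
have hn2 : odd n = false by rewrite Hnm addnn odd_double.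
have hpar : odd ((i + c + L) %% n) = odd (i + c) (+) odd L by rewrite odd_mod // oddD.
have hpar2 : odd ((i + c) %% n) = odd (i + c) by rewrite odd_mod.
rewrite !Q_small //.
move: ha hb hab hpar hpar2.
set a := ((i + c + L) %% n)%N; set b := ((i + c) %% n)%N => ha hb hab hpar hpar2.
rewrite /Pf; split.
  move=> hev; apply/negP => /eqP h0.
  move: hpar; rewrite (negbTE hev) addbF => hpar.
  have hodd : odd a = odd b by rewrite hpar hpar2.
  have hn1 : odd (n - 1) by rewrite oddB ?hn2 //; lia.
  clear hpar hpar2.
  move: h0; case: ifP => ha1; case: ifP => hb1 h0.
  - have e : a = b by lia.
    by rewrite e eqxx in hab.
  - have hs : (a + b = n - 1)%N by lia.
    by move: hn1; rewrite -hs oddD hodd addbb.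
  - have hs : (a + b = n - 1)%N by lia.
    by move: hn1; rewrite -hs oddD hodd addbb.
  - have e : a = b by lia.
    by rewrite e eqxx in hab.
move=> hod; clear hpar hpar2; do ![case: ifP => ?]; lia.
Qed.

Lemma pat_sum c : W (fun t => patf ((t + c) %% n)%N) 0 n = 0.
Proof. by rewrite W_pat Q_addn subrr. Qed.

Lemma pat_unit3 c : unit3 (fun t => patf ((t + c) %% n)%N).
Proof. by move=> t; rewrite /patf; do ![case: ifP => ?]; auto. Qed.

Lemma pat_per c : per (fun t => patf ((t + c) %% n)%N).
Proof. by move=> t; rewrite modnDml. Qed.

Lemma W_const (sg : int) i L : W (fun _ => sg) i L = sg *+ L.
Proof. by rewrite /W sumr_const_nat addKn. Qed.

Lemma const_wcond (sg : int) : sg = 1 \/ sg = -1 -> ~~ odd m -> wcond (fun _ => sg).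
Proof.
move=> hs hm i L hL; rewrite W_const.
by case: hs => ->; rewrite ?mulNrn natz; split => h; try split; lia.
Qed.

End Walk.

Close Scope ring_scope.

Lemma resid_formula n a b : 1 <= a <= n -> 1 <= b <= n ->
  resid n a b = if b <= a then a - b else a + n - b.
Proof.
move=> ha hb; rewrite /resid; case: ifP => h.
  have e : a + n - b = (a - b) + n by lia.
  by rewrite e modnDr modn_small; lia.
by rewrite modn_small; lia.
Qed.

Lemma dist_fwd n m a b : n = m + m -> 2 < m -> 1 <= a <= n -> 1 <= b <= n ->
  m - 1 <= dist n a b -> m - 1 <= resid n b a <= m + 1.
Proof. move=> h1 h2 h3 h4 h5; move: h5; rewrite /dist !resid_formula //; do ![case: ifP => ?]; lia. Qed.

Lemma dist_bwd n m a b : n = m + m -> 2 < m -> 1 <= a <= n -> 1 <= b <= n ->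
  m - 1 <= resid n b a <= m + 1 -> m - 1 <= dist n a b.
Proof. move=> h1 h2 h3 h4 h5; move: h5; rewrite /dist !resid_formula //; do ![case: ifP => ?]; lia. Qed.

Definition hh n s i := hj n s (i %% n).+1.
Definition mkrow n (h : nat -> nat) := [seq ((\sum_(0 <= t < j) h t) %% n).+1 | j <- iota 0 n].

Lemma ext_eq n s : ext_diff_row n s = [seq ((hj n s i.+1)%:Z - (n %/ 2)%:Z)%R | i <- iota 0 n].
Proof.
rewrite /ext_diff_row -[1]/(1 + 0) iotaDl -map_comp.
by apply: eq_map => i /=; rewrite add1n.
Qed.

Section Row.
Variables (n m : nat) (s : seq nat).
Hypotheses (Hnm : n = m + m) (Hm : 2 < m) (Hl : latin_row n s).

Lemma size_s : size s = n.
Proof. by rewrite (perm_size Hl) size_iota. Qed.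

Lemma uniq_s : uniq s.
Proof. by rewrite (perm_uniq Hl) iota_uniq. Qed.

Lemma xr j : j < n -> 1 <= nth 0 s j <= n.
Proof.
move=> hj; have : nth 0 s j \in iota 1 n by rewrite -(perm_mem Hl) mem_nth // size_s.
rewrite mem_iota; lia.
Qed.

Lemma modS_eq i : i.+1 %% n = (i %% n).+1 %% n.
Proof. by rewrite -[i.+1]addn1 -[(i %% n).+1]addn1 modnDml. Qed.

Lemma sj_csucc i : sj s (csucc n (i %% n).+1) = nth 0 s (i.+1 %% n).
Proof.
rewrite modS_eq /csucc /sj; case: eqP => h.
  by rewrite h modnn.
have h2 : (i %% n).+1 < n.
  have : i %% n < n by rewrite ltn_pmod //; lia.
  lia.
by rewrite (modn_small h2).
Qed.

Lemma hh_eq i : hh n s i = resid n (nth 0 s (i.+1 %% n)) (nth 0 s (i %% n)).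
Proof. by rewrite /hh /hj sj_csucc. Qed.

Definition y i := (nth 0 s (i %% n)).-1.

Lemma ltmod i : i %% n < n.
Proof. by rewrite ltn_pmod //; lia. Qed.

Lemma y_lt i : y i < n.
Proof. by have := xr (ltmod i); rewrite /y; lia. Qed.

Lemma y_step i : y i.+1 = (y i + hh n s i) %% n.
Proof.
rewrite hh_eq /y.
have := xr (ltmod i.+1); have := xr (ltmod i).
set a := nth 0 s (i.+1 %% n); set b := nth 0 s (i %% n) => hb ha.
rewrite resid_formula //; case: ifP => h.
  by rewrite modn_small; lia.
have e : b.-1 + (a + n - b) = a.-1 + n by lia.
by rewrite e modnDr modn_small; lia.
Qed.

Lemma y_win i L : y (i + L) = (y i + \sum_(i <= t < i + L) hh n s t) %% n.
Proof.
elim: L => [|L IH].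
  by rewrite addn0 big_geq // addn0 modn_small // y_lt.
by rewrite addnS y_step IH big_nat_recr /= ?leq_addr // modnDml addnA.
Qed.

Lemma y_inj i j : y i = y j -> i %% n = j %% n.
Proof.
move=> h; have hi := xr (ltmod i); have hj := xr (ltmod j).
have e : nth 0 s (i %% n) = nth 0 s (j %% n) by move: h; rewrite /y; lia.
by apply/eqP; rewrite -(nth_uniq 0 _ _ uniq_s) ?size_s ?ltmod // e.
Qed.

Lemma fwd_ii i L : 0 < L < n -> (\sum_(i <= t < i + L) hh n s t) %% n != 0.
Proof.
move=> hL; apply/negP => /eqP h0.
have := y_win i L; rewrite -modnDmr h0 addn0 modn_small ?y_lt // => /y_inj h1.
have : (i + L == i + 0 %[mod n]) by rewrite addn0 h1.
rewrite eqn_modDl mod0n modn_small; lia.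
Qed.

Lemma fwd_iii : (\sum_(0 <= t < n) hh n s t) %% n = 0.
Proof.
have := y_win 0 n; rewrite !add0n.
have -> : y n = y 0 by rewrite /y modnn mod0n.
move=> h.
have : (y 0 + \sum_(0 <= t < n) hh n s t == y 0 + 0 %[mod n]).
  by rewrite addn0 -h modn_small ?y_lt.
by rewrite eqn_modDl mod0n => /eqP.
Qed.

Lemma fwd_i (Hf : far_row n s) i : m - 1 <= hh n s i <= m + 1.
Proof.
move/forallP: Hf => /(_ (Ordinal (ltmod i))) /=.
rewrite /hh /hj sj_csucc /sj /= => h.
apply: (dist_fwd Hnm Hm); try exact: xr (ltmod _).
have -> : m = n %/ 2 by lia.
exact: h.
Qed.

Lemma DET (H1 : sj s 1 = 1) : s = mkrow n (hh n s).
Proof.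
apply: (@eq_from_nth _ 0); first by rewrite size_s size_map size_iota.
move=> j; rewrite size_s => hj.
rewrite (nth_map 0) ?size_iota // nth_iota // add0n.
have := y_win 0 j; rewrite !add0n /y mod0n (modn_small hj).
move: H1; rewrite /sj /= => ->.
have := xr hj; rewrite add0n; lia.
Qed.

End Row.

Section BWD.
Variables (n m : nat) (h : nat -> nat).
Hypotheses (Hnm : n = m + m) (Hm : 2 < m).
Hypothesis Hh1 : forall t, t < n -> m - 1 <= h t <= m + 1.
Hypothesis Hh2 : forall j k, j < k < n -> (\sum_(j <= t < k) h t) %% n != 0.
Hypothesis Hh3 : (\sum_(0 <= t < n) h t) %% n = 0.

Lemma size_mk : size (mkrow n h) = n.
Proof. by rewrite size_map size_iota. Qed.

Lemma nth_mk j : j < n -> nth 0 (mkrow n h) j = ((\sum_(0 <= t < j) h t) %% n).+1.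
Proof. by move=> hj; rewrite (nth_map 0) ?size_iota // nth_iota. Qed.

Lemma uniq_mk : uniq (mkrow n h).
Proof.
rewrite map_inj_in_uniq ?iota_uniq // => j k; rewrite !mem_iota !add0n => /andP [_ hj] /andP [_ hk] [].
case: (ltngtP j k) => // hlt hjk; exfalso.
- move: hjk; rewrite (big_cat_nat _ (n := j) (m := 0) (p := k)) //=; last by lia.
  move=> hjk.
  have : ((\sum_(0 <= t < j) h t) + \sum_(j <= t < k) h t == (\sum_(0 <= t < j) h t) + 0 %[mod n]).
    by rewrite addn0 hjk.
  rewrite eqn_modDl mod0n => /eqP h0.
  have hc : j < k < n by lia.
  by have := Hh2 hc; rewrite h0 eqxx.
- move: hjk; rewrite (big_cat_nat _ (n := k) (m := 0) (p := j)) //=; last by lia.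
  move=> hjk.
  have : ((\sum_(0 <= t < k) h t) + \sum_(k <= t < j) h t == (\sum_(0 <= t < k) h t) + 0 %[mod n]).
    by rewrite addn0 hjk.
  rewrite eqn_modDl mod0n => /eqP h0.
  have hc : k < j < n by lia.
  by have := Hh2 hc; rewrite h0 eqxx.
Qed.

Lemma mem_mk x : x \in mkrow n h -> x \in iota 1 n.
Proof.
move/mapP => [j _ ->]; rewrite mem_iota.
have : (\sum_(0 <= t < j) h t) %% n < n by rewrite ltn_pmod //; lia.
lia.
Qed.

Lemma latin_mk : latin_row n (mkrow n h).
Proof.
rewrite /latin_row; apply: uniq_perm; [exact: uniq_mk | exact: iota_uniq |].
have hs : size (iota 1 n) <= size (mkrow n h) by rewrite size_mk size_iota.
by have [_ H] := uniq_min_size uniq_mk mem_mk hs.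
Qed.

Lemma sj1_mk : sj (mkrow n h) 1 = 1.
Proof. by rewrite /sj /= nth_mk ?big_geq ?mod0n //; lia. Qed.

Lemma hj_mk i : i < n -> hj n (mkrow n h) i.+1 = h i.
Proof.
move=> hi; rewrite /hj /csucc.
have hhi := Hh1 hi.
case: eqP => hin.
- rewrite sj1_mk /sj /= nth_mk //.
  have h3 : ((\sum_(0 <= t < i) h t) %% n + h i) %% n = 0.
    by move: Hh3; rewrite -hin big_nat_recr //= modnDml.
  have hr : (\sum_(0 <= t < i) h t) %% n < n by rewrite ltn_pmod //; lia.
  move: h3 hr; set r := (\sum_(0 <= t < i) h t) %% n => h3 hr.
  move: h3; rewrite modn_lt2; last by lia.
  case: ifP => hlt h3; first by lia.
  rewrite resid_formula; try lia.
  by case: ifP => ?; lia.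
- have hi1 : i.+1 < n by lia.
  rewrite /sj /= !nth_mk //.
  rewrite big_nat_recr //= -modnDml.
  have hr : (\sum_(0 <= t < i) h t) %% n < n by rewrite ltn_pmod //; lia.
  move: hr; set r := (\sum_(0 <= t < i) h t) %% n => hr.
  rewrite modn_lt2; last by lia.
  case: ifP => hlt; rewrite resid_formula; try lia.
    by case: ifP => ?; lia.
  by case: ifP => ?; lia.
Qed.

Lemma sj_mk_range k : 1 <= k <= n -> 1 <= sj (mkrow n h) k <= n.
Proof.
move=> hk; have : sj (mkrow n h) k \in iota 1 n.
  by apply: mem_mk; rewrite /sj mem_nth // size_mk; lia.
rewrite mem_iota; lia.
Qed.

Lemma far_mk : far_row n (mkrow n h).
Proof.
apply/forallP => j /=.
have hjn := ltn_ord j.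
have := hj_mk hjn; rewrite /hj => e.
have -> : n %/ 2 - 1 = m - 1 by lia.
apply: (dist_bwd Hnm Hm).
- by apply: sj_mk_range; lia.
- by apply: sj_mk_range; rewrite /csucc; case: ifP; lia.
- by rewrite e; apply: Hh1.
Qed.

Lemma ext_mk : ext_diff_row n (mkrow n h) = [seq ((h i)%:Z - (n %/ 2)%:Z)%R | i <- iota 0 n].
Proof.
rewrite ext_eq; apply/eq_in_map => i; rewrite mem_iota add0n => /andP [_ hi].
by rewrite hj_mk.
Qed.

End BWD.

Section Conv.
Local Open Scope ring_scope.
Variables (n m : nat).
Hypotheses (Hnm : n = (m + m)%N) (Hm : (2 < m)%N).

Lemma Posz_sum (h : nat -> nat) p q :
  ((\sum_(p <= t < q) h t)%N)%:Z = \sum_(p <= t < q) (h t)%:Z.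
Proof. by rewrite -natz natr_sum; apply: eq_bigr => t _; rewrite natz. Qed.

Lemma W_h (h : nat -> nat) i L :
  W (fun t => (h t)%:Z - m%:Z) i L = ((\sum_(i <= t < i + L) h t)%N)%:Z - ((L * m)%N)%:Z.
Proof.
rewrite /W sumrB Posz_sum sumr_const_nat addKn pmulrn mulrzz.
congr (_ - _); lia.
Qed.

Lemma leq_sum_rng (f g : nat -> nat) p q : (forall t, (p <= t < q)%N -> (f t <= g t)%N) ->
  (\sum_(p <= t < q) f t <= \sum_(p <= t < q) g t)%N.
Proof. by move=> H; rewrite !big_seq; apply: leq_sum => t; rewrite mem_index_iota; apply: H. Qed.

Lemma sum_bounds (h : nat -> nat) i L : (forall t, (i <= t < i + L)%N -> (m - 1 <= h t <= m + 1)%N) ->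
  (L * (m - 1) <= \sum_(i <= t < i + L) h t <= L * (m + 1))%N.
Proof.
move=> hb; apply/andP; split.
  have := @leq_sum_rng (fun _ => (m - 1)%N) h i (i + L).
  rewrite sum_nat_const_nat addKn => -> // t ht; by case/andP: (hb t ht).
have := @leq_sum_rng h (fun _ => (m + 1)%N) i (i + L).
rewrite sum_nat_const_nat addKn => -> // t ht; by case/andP: (hb t ht).
Qed.

Lemma ar_ev (L l H : nat) : L = (l + l)%N -> H = (L * m)%N -> H = (l * n)%N.
Proof. move=> -> ->; rewrite Hnm; nia. Qed.

Lemma ar_od1 (L l H : nat) : L = (l + l + 1)%N -> H = (L * m + m)%N -> H = ((l + 1) * n)%N.
Proof. move=> -> ->; rewrite Hnm; nia. Qed.

Lemma ar_od2 (L l H : nat) : L = (l + l + 1)%N -> (H + m = L * m)%N -> H = (l * n)%N.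
Proof. move=> -> e; rewrite Hnm; nia. Qed.

Lemma ar_bev (L l H q : nat) : (0 < L < n)%N -> L = (l + l)%N ->
  (L * (m - 1) <= H <= L * (m + 1))%N -> H = (q * n)%N -> H = (L * m)%N.
Proof.
move=> h1 h2 h3 h4.
have : q = l by move: h3; rewrite h4 => h3; nia.
move=> e; subst q; rewrite h4 h2 Hnm; nia.
Qed.

Lemma ar_bod (L l H q : nat) : (0 < L < n)%N -> L = (l + l + 1)%N ->
  (L * (m - 1) <= H <= L * (m + 1))%N -> H = (q * n)%N -> (H + m = L * m)%N \/ H = (L * m + m)%N.
Proof.
move=> h1 h2 h3 h4.
have : (q = l \/ q = l + 1)%N by move: h3; rewrite h4 => h3; nia.
by case=> e; subst q; [left|right]; rewrite h4 h2 Hnm; nia.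
Qed.

Lemma conv_fwd (h : nat -> nat) :
  (forall t, (m - 1 <= h t <= m + 1)%N) ->
  (forall i L, (0 < L < n)%N -> (\sum_(i <= t < i + L) h t) %% n != 0)%N ->
  ((\sum_(0 <= t < n) h t) %% n = 0)%N ->
  wcond n m (fun t => (h t)%:Z - m%:Z) /\
  (let w := W (fun t => (h t)%:Z - m%:Z) 0 n in w = 0 \/ w = n%:Z \/ w = - n%:Z).
Proof.
move=> H1 H2 H3; split.
  move=> i L hL; have := H2 i L hL; rewrite W_h.
  set H := (\sum_(i <= t < i + L) h t)%N => hH.
  have hl := odd_double_half L.
  move: (L./2) hl => l hl.
  split => hp.
    apply/negP => /eqP h0.
    have e : (H = l * n)%N by apply: (@ar_ev L); [move: hp hl; case: (odd L) => // _; lia | lia].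
    by move: hH; rewrite e modnMl.
  split; apply/negP => /eqP h0.
    have e : (H = (l + 1) * n)%N by apply: (@ar_od1 L); [move: hp hl; case: (odd L) => // _; lia | lia].
    by move: hH; rewrite e modnMl.
  have e : (H = l * n)%N by apply: (@ar_od2 L); [move: hp hl; case: (odd L) => // _; lia | lia].
  by move: hH; rewrite e modnMl.
move=> /=; rewrite W_h add0n.
have := sum_bounds (fun t _ => H1 t) (i := 0) (L := n); rewrite add0n.
move: H3; set H := (\sum_(0 <= t < n) h t)%N => H3 hB.
have hq : H = (H %/ n * n)%N by rewrite {1}(divn_eq H n) H3 addn0.
move: (H %/ n)%N hq => q hq.
have hn0 : (0 < n)%N by lia.
have hq1 : (m - 1 <= q)%N by rewrite -(leq_pmul2r hn0) -hq mulnC; case/andP: hB.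
have hq2 : (q <= m + 1)%N by rewrite -(leq_pmul2r hn0) -hq mulnC; case/andP: hB.
have : (q = m - 1 \/ q = m \/ q = m + 1)%N by lia.
case=> [e|[e|e]]; [right;right|left|right;left]; subst q; rewrite hq; nia.
Qed.

Lemma conv_bwd (e : nat -> int) : unit3 e -> wcond n m e ->
  (W e 0 n = 0 \/ W e 0 n = n%:Z \/ W e 0 n = - n%:Z) ->
  let h := fun t => absz (e t + m%:Z) in
  [/\ forall t, (m - 1 <= h t <= m + 1)%N,
      forall j k, (j < k < n)%N -> ((\sum_(j <= t < k) h t) %% n != 0)%N,
      ((\sum_(0 <= t < n) h t) %% n = 0)%N &
      forall t, (h t)%:Z = e t + m%:Z].
Proof.
move=> H3 Hw Hs h.
have he : forall t, (h t)%:Z = e t + m%:Z.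
  by move=> t; rewrite /h gez0_abs //; case: (H3 t) => [->|[->|->]]; lia.
have hb : forall t, (m - 1 <= h t <= m + 1)%N.
  by move=> t; have := he t; case: (H3 t) => [->|[->|->]]; lia.
have hW : forall i L, W e i L = ((\sum_(i <= t < i + L) h t)%N)%:Z - ((L * m)%N)%:Z.
  move=> i L; rewrite -W_h /W; apply: eq_bigr => t _; by rewrite he addrK.
split => //.
  move=> j k hjk; apply/negP => /eqP h0.
  have hL : (0 < k - j < n)%N by lia.
  have [hev hod] := Hw j (k - j)%N hL.
  move: hev hod; rewrite hW subnKC; last by lia.
  have := sum_bounds (fun t _ => hb t) (i := j) (L := (k - j)%N); rewrite subnKC; last by lia.
  move: h0; set H := (\sum_(j <= t < k) h t)%N => h0 hB.
  have hq : H = (H %/ n * n)%N by rewrite {1}(divn_eq H n) h0 addn0.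
  move: (H %/ n)%N hq => q hq.
  have hl2 := odd_double_half (k - j).
  move: ((k - j)./2) hl2 hB => l hl hB.
  move: hl hB hL; set L := (k - j)%N => hl hB hL.
  case: (boolP (odd L)) => hp hev hod.
    have hl' : L = (l + l + 1)%N by move: hl; rewrite hp; lia.
    have := ar_bod hL hl' hB hq.
    have [hod1 hod2] := hod isT.
    by case=> e0; [move: hod2|move: hod1]; apply/negP; rewrite negbK; apply/eqP; lia.
  have hl' : L = (l + l)%N by move: hl; rewrite (negbTE hp); lia.
  have := ar_bev hL hl' hB hq.
  move=> e0.
  by move: (hev isT); apply/negP; rewrite negbK; apply/eqP; lia.
have := hW 0%N n; rewrite add0n.
set H := (\sum_(0 <= t < n) h t)%N => hw.
case: Hs => [e0|[e0|e0]]; rewrite e0 in hw.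
- have : (H = m * n)%N by nia.
  by move=> ->; rewrite modnMl.
- have : (H = (m + 1) * n)%N by nia.
  by move=> ->; rewrite modnMl.
- have : (H = (m - 1) * n)%N by nia.
  by move=> ->; rewrite modnMl.
Qed.

Lemma all_one (e : nat -> int) : (forall t, e t <= 1) ->
  \sum_(0 <= t < n) e t = n%:Z -> forall t, (t < n)%N -> e t = 1.
Proof.
move=> hle hs t ht.
have h0 : \sum_(0 <= t < n) (1 - e t) = 0 by rewrite sumrB sumr_const_nat hs subn0 natz subrr.
move: h0; rewrite big_mkord => h0.
have hpos : forall i : 'I_n, predT i -> 0 <= 1 - e i by move=> i _; have := hle i; lia.
have := @psumr_eq0P _ _ predT (fun i : 'I_n => 1 - e i) hpos h0 (Ordinal ht) isT.
by move=> /= h1; lia.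
Qed.

End Conv.

Section Pat.
Variables (n m : nat).
Hypotheses (Hnm : n = (m + m)%N) (Hm : (2 < m)%N).

Lemma m_eq : (n %/ 2 = m)%N.
Proof. lia. Qed.

Lemma size_pattern : size (pattern n) = n.
Proof. rewrite /pattern !size_cat !size_nseq /= m_eq; lia. Qed.

Lemma nth_pattern t : (t < n)%N -> nth 0%R (pattern n) t = patf n m t.
Proof.
move=> ht; rewrite /pattern m_eq -[[:: 0%R]]/(nseq 1 (0%R : int)).
rewrite !nth_cat !size_nseq !nth_nseq /patf.
do ![case: ifP => ?]; lia.
Qed.

Lemma nth_rotr_pat k i : (k <= n)%N -> (i < n)%N ->
  nth 0%R (rotr k (pattern n)) i = patf n m ((i + (n - k)) %% n)%N.
Proof.
move=> hk hi; rewrite /rotr size_pattern nth_rot size_pattern //; last by lia.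
by rewrite nth_pattern // ltn_pmod //; lia.
Qed.

Lemma rot_aux k k' : (1 <= k)%N -> (k < k')%N -> (k' <= n)%N ->
  rotr k (pattern n) = rotr k' (pattern n) -> False.
Proof.
move=> h1 h2 h3 E.
have e1 := congr1 (fun s => nth 0%R s (k' - 1)%N) E.
have e2 := congr1 (fun s => nth 0%R s (k' - 2)%N) E.
move: e1 e2 => /=.
rewrite (@nth_rotr_pat k (k' - 1) ltac:(lia) ltac:(lia)) (@nth_rotr_pat k' (k' - 1) ltac:(lia) ltac:(lia)).
rewrite (@nth_rotr_pat k (k' - 2) ltac:(lia) ltac:(lia)) (@nth_rotr_pat k' (k' - 2) ltac:(lia) ltac:(lia)).
have r1 : ((k' - 1 + (n - k')) %% n = n - 1)%N by rewrite modn_small; lia.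
have r2 : ((k' - 2 + (n - k')) %% n = n - 2)%N by rewrite modn_small; lia.
have r3 : ((k' - 1 + (n - k)) %% n = k' - k - 1)%N.
  by rewrite (@modn_lt2 _ n); [case: ifP; lia | lia].
rewrite r1 r2 r3 => e1.
clear E r1 r2 r3.
have hkm : (k' - k = m)%N by move: e1; rewrite /patf; do ![case: ifP => ?]; lia.
have r4 : ((k' - 2 + (n - k)) %% n = m - 2)%N.
  by rewrite (@modn_lt2 _ n); [case: ifP; lia | lia].
rewrite r4; clear r4; rewrite /patf; do ![case: ifP => ?]; lia.
Qed.

Lemma rot_inj k k' : (1 <= k <= n)%N -> (1 <= k' <= n)%N ->
  rotr k (pattern n) = rotr k' (pattern n) -> k = k'.
Proof.
move=> hk hk' E; case: (ltngtP k k') => // h; exfalso.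
  by apply: (@rot_aux k k') => //; lia.
by apply: (@rot_aux k' k) => //; lia.
Qed.

Lemma nseq_not_rot (sg : int) k : sg != 0%R -> (1 <= k <= n)%N -> nseq n sg != rotr k (pattern n).
Proof.
move=> hs hk; apply/negP => /eqP E.
have := congr1 (fun s => nth 0%R s (k - 1)%N) E => /=.
rewrite nth_nseq (@nth_rotr_pat k (k - 1) ltac:(lia) ltac:(lia)).
have -> : (k - 1 < n)%N by lia.
rewrite (@modn_lt2 (k - 1 + (n - k)) n); last by lia.
have -> : (k - 1 + (n - k) < n)%N by lia.
have -> : (k - 1 + (n - k) = n - 1)%N by lia.
rewrite /patf; do ![case: ifP => ?]; move=> e; move: hs; rewrite e; try lia.
Qed.

End Pat.

Lemma mkrow_ext n (h h' : nat -> nat) : (forall t, t < n -> h t = h' t) -> mkrow n h = mkrow n h'.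
Proof.
move=> H; apply/eq_in_map => j; rewrite mem_iota => /andP [_ hj].
congr ((_ %% _).+1); apply: eq_big_nat => t ht; apply: H; lia.
Qed.

Section Main.
Variable n : nat.
Hypotheses (H6 : 6 <= n) (Hev : ~~ odd n).

Definition mm := n %/ 2.
Lemma Hnm : n = mm + mm. Proof. rewrite /mm; lia. Qed.
Lemma Hm : 2 < mm. Proof. rewrite /mm; lia. Qed.

Definition ee s t : int := (Posz (hh n s t) - (Posz mm))%R.

Lemma ext_ee s : ext_diff_row n s = [seq ee s i | i <- iota 0 n].
Proof.
rewrite ext_eq; apply/eq_in_map => i; rewrite mem_iota => /andP [_ hi].
by rewrite /ee /hh modn_small.
Qed.

Lemma ee_props s : latin_row n s -> far_row n s ->
  [/\ unit3 (ee s), per n (ee s), wcond n mm (ee s) &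
      (W (ee s) 0 n = 0%R \/ W (ee s) 0 n = (Posz n) \/ W (ee s) 0 n = (- (Posz n))%R)].
Proof.
move=> Hl Hf.
have hb := fwd_i Hnm Hm Hl Hf.
have [Hw Hs] := conv_fwd Hnm Hm hb (fun i L hL => @fwd_ii n mm s Hnm Hm Hl i L hL) (fwd_iii Hnm Hm Hl).
split => //.
- by move=> t; have := hb t; rewrite /ee; lia.
- by move=> t; rewrite /ee /hh modn_mod.
Qed.

Lemma part1 s : latin_row n s -> far_row n s ->
  is_rotation_of (ext_diff_row n s) (pattern n)
  \/ ext_diff_row n s = nseq n 1%R
  \/ ext_diff_row n s = nseq n (-1)%R.
Proof.
move=> Hl Hf.
have [He3 Hper Hw Hs] := ee_props Hl Hf.
have hle : forall t, (ee s t <= 1)%R by move=> t; case: (He3 t) => [->|[->|->]].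
case: Hs => [H0|[H1|H2]].
- have [c Hc] := structure Hnm Hm He3 Hper Hw H0.
  have hc : c %% n < n by rewrite ltn_pmod //; lia.
  left; exists (n - c %% n); rewrite (size_pattern Hnm Hm); split; first by lia.
  rewrite ext_ee; apply: (@eq_from_nth _ 0%R).
    by rewrite size_map size_iota size_rotr (size_pattern Hnm Hm).
  move=> i; rewrite size_map size_iota => hi.
  rewrite (nth_map 0) ?size_iota // nth_iota // add0n Hc.
  rewrite (@nth_rotr_pat n mm Hnm Hm (n - c %% n) i ltac:(lia) hi).
  by rewrite subKn ?(ltnW hc) // modnDmr.
- right; left.
  have h1 : forall t, t < n -> ee s t = 1%R.
    by move=> t ht; apply: (all_one Hnm Hm hle) => //; move: H1; rewrite /W add0n.
  rewrite ext_ee; apply: (@eq_from_nth _ 0%R); first by rewrite size_map size_iota size_nseq.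
  move=> i; rewrite size_map size_iota => hi.
  by rewrite (nth_map 0) ?size_iota // nth_iota // add0n h1 // nth_nseq hi.
- right; right.
  have hle' : forall t, (- ee s t <= 1)%R by move=> t; case: (He3 t) => [->|[->|->]].
  have h1 : forall t, t < n -> ee s t = (-1)%R.
    move=> t ht; apply/eqP; rewrite -eqr_opp opprK; apply/eqP.
    apply: (all_one Hnm Hm hle') => //; move: H2; rewrite /W add0n sumrN => ->; by rewrite opprK.
  rewrite ext_ee; apply: (@eq_from_nth _ 0%R); first by rewrite size_map size_iota size_nseq.
  move=> i; rewrite size_map size_iota => hi.
  by rewrite (nth_map 0) ?size_iota // nth_iota // add0n h1 // nth_nseq hi.
Qed.

Lemma ones_even s (sg : int) : latin_row n s -> far_row n s ->
  ext_diff_row n s = nseq n sg -> sg = 1%R \/ sg = (-1)%R -> ~~ odd mm.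
Proof.
move=> Hl Hf E hs.
have [He3 Hper Hw Hs] := ee_props Hl Hf.
have h1 : forall t, t < n -> ee s t = sg.
  move=> t ht; have := congr1 (fun d => nth 0%R d t) E; rewrite /= ext_ee.
  by rewrite (nth_map 0) ?size_iota // nth_iota // add0n nth_nseq ht.
have hW : W (ee s) 0 mm = (sg *+ mm)%R.
  rewrite /W add0n (eq_big_nat _ _ (F2 := fun _ => sg)) ?sumr_const_nat ?subn0 //.
  move=> t ht; apply: h1; have := Hm; have := Hnm; lia.
apply/negP => hodd.
have hL : 0 < mm < n by have := Hm; have := Hnm; lia.
have [_ /(_ hodd) [e1 e2]] := Hw 0 mm hL.
by move: e1 e2; rewrite hW; case: hs => ->; rewrite ?mulNrn natz; lia.
Qed.

Lemma build (e : nat -> int) : unit3 e -> wcond n mm e ->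
  (W e 0 n = 0%R \/ W e 0 n = (Posz n) \/ W e 0 n = (- (Posz n))%R) ->
  exists s, [&& latin_row n s, far_row n s & sj s 1 == 1] /\
            ext_diff_row n s = [seq e i | i <- iota 0 n].
Proof.
move=> He3 Hw Hs.
have [hb h2 h3 he] := conv_bwd Hnm Hm He3 Hw Hs.
exists (mkrow n (fun t => absz (e t + (Posz mm))%R)); split.
  rewrite (latin_mk Hnm Hm h2 h3) (far_mk Hnm Hm (fun t _ => hb t) h3) (sj1_mk Hnm Hm h3) //.
rewrite (ext_mk Hnm Hm (fun t _ => hb t) h3); apply: eq_map => i.
by rewrite he -/mm addrK.
Qed.

End Main.

Unset Implicit Arguments.

Theorem mainTheorem4 (n : nat) : (6 <= n)%N -> ~~ odd n ->
  (forall s : seq nat, latin_row n s -> far_row n s ->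
     is_rotation_of (ext_diff_row n s) (pattern n)
     \/ ext_diff_row n s = nseq n 1%R
     \/ ext_diff_row n s = nseq n (-1)%R)
  /\
  size [seq s <- permutations (iota 1 n) | far_row n s && (sj s 1 == 1%N)]
    = (if n %% 4 == 0 then n + 2 else n)%N.
Proof.
move=> H6 Hev; split; first by move=> s; apply: part1.
have Hnm := Hnm H6 Hev; have Hm := Hm H6 Hev.
set F := [seq s <- _ | _].
pose R := [seq rotr k (pattern n) | k <- iota 1 n].
pose X := (if n %% 4 == 0 then [:: nseq n (1%R : int); nseq n (-1)%R] else [::]).
have memF : forall s, (s \in F) = [&& latin_row n s, far_row n s & sj s 1 == 1%N].
  move=> s; rewrite mem_filter mem_permutations /latin_row.
  by case: (perm_eq s _); case: (far_row n s); case: (sj s 1 == 1%N).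
have uF : uniq F by apply: filter_uniq; apply: permutations_uniq.
have hinj : {in F &, injective (ext_diff_row n)}.
  move=> s1 s2; rewrite !memF => /and3P [l1 f1 /eqP e1] /and3P [l2 f2 /eqP e2] heq.
  rewrite (DET Hnm Hm l1 e1) (DET Hnm Hm l2 e2); apply: mkrow_ext => t ht.
  have := congr1 (fun d => nth 0%R d t) heq; rewrite /= !ext_ee.
  rewrite !(nth_map 0%N) ?size_iota // nth_iota // /ee add0n; lia.
have uM : uniq (map (ext_diff_row n) F) by rewrite map_inj_in_uniq.
have notR : forall sg : int, sg != 0%R -> nseq n sg \notin R.
  move=> sg hs; apply/mapP => [[k hk E]].
  have hk' : (1 <= k <= n)%N by move: hk; rewrite mem_iota; lia.
  by move: (nseq_not_rot Hnm Hm hs hk'); rewrite E eqxx.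
have uD : uniq (R ++ X).
  rewrite cat_uniq; apply/and3P; split.
  - rewrite map_inj_in_uniq ?iota_uniq // => k k'; rewrite !mem_iota => hk hk'.
    by apply: (rot_inj Hnm Hm); lia.
  - rewrite /X; case: ifP => _ //=.
    by rewrite (negbTE (notR _ _)) ?(negbTE (notR _ _)).
  - rewrite /X; case: ifP => _ //=; rewrite inE andbT.
    apply/eqP => E; have := congr1 (fun d => nth 0%R d 0) E.
    by rewrite /= !nth_nseq (_ : (0 < n)%N = true) //; lia.
have hmem : map (ext_diff_row n) F =i R ++ X.
  move=> d; apply/mapP/idP => [[s hs ->]|].
  - move: hs; rewrite memF => /and3P [l f _].
    case: (part1 H6 Hev l f) => [[k [hk ->]]|[h1|h1]].
    + rewrite mem_cat; apply/orP; left; apply: map_f.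
      by move: hk; rewrite (size_pattern Hnm Hm) mem_iota; lia.
    + have hm := ones_even H6 Hev l f h1 (or_introl erefl).
      have h4 : (n %% 4 == 0)%N by move: hm; rewrite /mm; lia.
      by rewrite h1 mem_cat /X h4 !inE eqxx orbT.
    + have hm := ones_even H6 Hev l f h1 (or_intror erefl).
      have h4 : (n %% 4 == 0)%N by move: hm; rewrite /mm; lia.
      by rewrite h1 mem_cat /X h4 !inE eqxx !orbT.
  - rewrite mem_cat => /orP [/mapP [k hk ->] | hd].
    + have hk' : (1 <= k <= n)%N by move: hk; rewrite mem_iota; lia.
      have [s [hs hext]] := build H6 Hev (pat_unit3 n (mm n) (n - k))
        (pat_wcond Hnm Hm (n - k)) (or_introl (pat_sum Hnm Hm (n - k))).
      exists s; first by rewrite memF.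
      rewrite hext; apply: (@eq_from_nth _ 0%R);
        rewrite ?size_map ?size_iota ?size_rotr ?(size_pattern Hnm Hm) // => i hi.
      rewrite (nth_map 0%N) ?size_iota // nth_iota // add0n.
      by rewrite (@nth_rotr_pat n (mm n) Hnm Hm k i ltac:(lia) hi).
    + move: hd; rewrite /X; case: ifP => h4 //.
      have hm : ~~ odd (mm n) by move: h4; rewrite /mm; lia.
      have hconst : forall sg : int, (sg = 1%R \/ sg = (-1)%R) -> nseq n sg \in map (ext_diff_row n) F.
        move=> sg hsg.
        have u3 : unit3 (fun _ => sg) by move=> t; case: hsg => ->; auto.
        have hs : (W (fun _ => sg) 0 n = 0%R \/ W (fun _ => sg) 0 n = Posz n \/ W (fun _ => sg) 0 n = (- Posz n)%R).
          by rewrite W_const; case: hsg => ->; rewrite ?mulNrn natz; auto.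
        have [s [hs' hext]] := build H6 Hev u3 (const_wcond Hnm Hm hsg hm) hs.
        apply/mapP; exists s; first by rewrite memF.
        rewrite hext; apply: (@eq_from_nth _ 0%R);
          rewrite ?size_map ?size_iota ?size_nseq // => i hi.
        by rewrite (nth_map 0%N) ?size_iota // nth_nseq hi.
      rewrite !inE => /orP [] /eqP ->.
        by apply/mapP; apply: hconst; left.
      by apply/mapP; apply: hconst; right.
have := perm_size (uniq_perm uM uD hmem).
rewrite size_map => ->.
rewrite size_cat /R /X size_map size_iota.
by case: ifP => _ //=; rewrite ?addn0; lia.
Qed.
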